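(* Let $\lambda\in\mathbb C$, $n\in\mathbb N$, $0<\rho\le1$, and let $C_{\rho,\lambda}=\operatorname{conv}\{(\mu,\mu^2,\dots,\mu^n):\mu\in\mathbb C,\ |\mu-\lambda|\le\rho\}\subset\mathbb C^n$. Then $$\operatorname{dist}\{(\lambda,\lambda^2,\dots,\lambda^n),\partial C_{\rho,\lambda}\}\ge\frac{\rho^n}{4^n\max\{1,|\lambda|^n\}},$$ and if $\lambda=0$ then $\operatorname{dist}\{(0,\dots,0),\partial C_{\rho,0}\}\ge\rho^n/2^n$.
   Context: $\operatorname{conv}$ denotes convex hull, $\partial$ topological boundary in $\mathbb C^n$, and distances are taken with respect to the norm $\|z\|=\max_j|z_j|$ on $\mathbb C^n$. *)

(* Defs.v *)
(* classical real numbers.  C is modelled as R*R, and a point of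
   C^n as a function nat -> C of which only the coordinates 1..n are used. *)
From Stdlib Require Import Reals Lra.
Open Scope R_scope.

Definition Cx : Type := (R * R)%type.
Definition C0 : Cx := (0, 0).
Definition C1 : Cx := (1, 0).
Definition Cadd (z w : Cx) : Cx := (fst z + fst w, snd z + snd w).
Definition Csub (z w : Cx) : Cx := (fst z - fst w, snd z - snd w).
Definition Cmul (z w : Cx) : Cx :=
  (fst z * fst w - snd z * snd w, fst z * snd w + snd z * fst w).
Definition Cscale (r : R) (z : Cx) : Cx := (r * fst z, r * snd z).
Fixpoint Cpow (z : Cx) (k : nat) : Cx :=
  match k with O => C1 | S j => Cmul z (Cpow z j) end.
Definition Cmod (z : Cx) : R := sqrt (fst z * fst z + snd z * snd z).

Definition vec : Type := nat -> Cx.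

Fixpoint maxupto (n : nat) (f : nat -> R) : R :=
  match n with O => 0 | S m => Rmax (maxupto m f) (f (S m)) end.

Definition vdist (n : nat) (z w : vec) : R :=
  maxupto n (fun k => Cmod (Csub (z k) (w k))).

Definition vec_eq (n : nat) (z w : vec) : Prop :=
  forall k, (1 <= k <= n)%nat -> z k = w k.

Fixpoint rsum (m : nat) (f : nat -> R) : R :=
  match m with O => 0 | S j => rsum j f + f j end.
Fixpoint csum (m : nat) (f : nat -> Cx) : Cx :=
  match m with O => C0 | S j => Cadd (csum j f) (f j) end.

Definition conv (n : nat) (S : vec -> Prop) (z : vec) : Prop :=
  exists (m : nat) (w : nat -> R) (p : nat -> vec),
    (forall i, (i < m)%nat -> 0 <= w i /\ S (p i)) /\
    rsum m w = 1 /\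
    vec_eq n z (fun k => csum m (fun i => Cscale (w i) (p i k))).

Definition interior (n : nat) (S : vec -> Prop) (z : vec) : Prop :=
  exists eps, 0 < eps /\ forall w, vdist n z w < eps -> S w.
Definition closure (n : nat) (S : vec -> Prop) (z : vec) : Prop :=
  forall eps, 0 < eps -> exists w, vdist n z w < eps /\ S w.
Definition boundary (n : nat) (S : vec -> Prop) (z : vec) : Prop :=
  closure n S z /\ ~ interior n S z.

Definition moment (mu : Cx) : vec := fun k => Cpow mu k.

Definition Cset (n : nat) (rho : R) (lam : Cx) : vec -> Prop :=
  conv n (fun v => exists mu, Cmod (Csub mu lam) <= rho /\ vec_eq n v (moment mu)).

(* Main.v *)
From Stdlib Require Import Reals Lra Ring Field Lia FunctionalExtensionality.
From Coquelicot Require Import Coquelicot.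
Require Import Defs.
Open Scope R_scope.

Lemma Cpow_eq z k : Defs.Cpow z k = Complex.Cpow z k.
Proof. induction k; simpl; [reflexivity|]. rewrite IHk. reflexivity. Qed.

Lemma Cmod_eq z : Defs.Cmod z = Complex.Cmod z.
Proof. unfold Defs.Cmod, Complex.Cmod. f_equal. simpl. ring. Qed.

Lemma Cscale_eq r z : Cscale r z = Cmult (RtoC r) z.
Proof. destruct z as [a b]. unfold Cscale, Cmult, RtoC; simpl. f_equal; ring. Qed.

Fixpoint Sh (a : C) (k : nat) (x : nat -> C) : C :=
  match k with O => x O | S k => (a * Sh a k x + Sh a k (fun j => x (S j)))%C end.

Lemma Sh_ext a k x y : (forall j, (j <= k)%nat -> x j = y j) -> Sh a k x = Sh a k y.
Proof.
  revert x y; induction k; intros x y H; simpl.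
  - apply H; lia.
  - rewrite (IHk x y) by (intros; apply H; lia).
    rewrite (IHk (fun j => x (S j)) (fun j => y (S j))) by (intros; apply H; lia).
    reflexivity.
Qed.

Lemma Sh_lin a k c y z :
  Sh a k (fun j => (c * y j + z j)%C) = (c * Sh a k y + Sh a k z)%C.
Proof.
  revert y z; induction k; intros y z; simpl; [reflexivity|].
  rewrite IHk. rewrite (IHk (fun j => y (S j)) (fun j => z (S j))). ring.
Qed.

Lemma Sh_zero a k : Sh a k (fun _ => 0%C) = 0%C.
Proof. induction k; simpl; [reflexivity|]. rewrite IHk. ring. Qed.

Lemma Sh_0 k x : Sh 0%C k x = x k.
Proof.
  revert x; induction k; intros x; simpl; [reflexivity|].
  rewrite !IHk. ring.
Qed.

Lemma Sh_comp a b k x :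
  Sh a k (fun j => Sh b j x) = Sh (a + b)%C k x.
Proof.
  revert x; induction k; intros x; simpl; [reflexivity|].
  change (fun j => Sh b (S j) x) with
    (fun j => (b * Sh b j x + Sh b j (fun j0 => x (S j0)))%C).
  rewrite Sh_lin, IHk, IHk. ring.
Qed.

Lemma Sh_mom a k mu : Sh a k (Complex.Cpow mu) = Complex.Cpow (a + mu)%C k.
Proof.
  revert a; induction k; intros a; simpl; [reflexivity|].
  transitivity ((a * Sh a k (Complex.Cpow mu) +
                 Sh a k (fun j => (mu * Complex.Cpow mu j + 0)%C))%C).
  { f_equal. apply Sh_ext. intros; simpl. rewrite Cplus_0_r. reflexivity. }
  rewrite Sh_lin, Sh_zero, !IHk. ring.
Qed.

Lemma Sh_bound a k x d :
  (forall j, (j <= k)%nat -> Complex.Cmod (x j) <= d) ->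
  Complex.Cmod (Sh a k x) <= d * (1 + Complex.Cmod a) ^ k.
Proof.
  revert x; induction k; intros x H; simpl.
  - rewrite Rmult_1_r. apply H; lia.
  - eapply Rle_trans. apply Cmod_triangle. rewrite Cmod_mult.
    assert (H1 := IHk x ltac:(intros; apply H; lia)).
    assert (H2 := IHk (fun j => x (S j)) ltac:(intros; apply H; lia)).
    assert (0 <= Complex.Cmod a) by apply Cmod_ge_0.
    assert (Complex.Cmod a * Complex.Cmod (Sh a k x) <= Complex.Cmod a * (d * (1 + Complex.Cmod a) ^ k))
      by (apply Rmult_le_compat_l; auto).
    lra.
Qed.

Lemma Sh_csum a k m (c : nat -> C) (y : nat -> nat -> C) :
  Sh a k (fun j => csum m (fun i => (c i * y i j)%C)) = csum m (fun i => (c i * Sh a k (y i))%C).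
Proof.
  induction m; simpl.
  - apply Sh_zero.
  - transitivity (Sh a k (fun j => (c m * y m j + csum m (fun i => (c i * y i j)%C))%C)).
    { apply Sh_ext; intros. unfold Cadd. change (csum m (fun i => (c i * y i j)%C) + c m * y m j
        = c m * y m j + csum m (fun i => (c i * y i j)%C))%C. ring. }
    rewrite Sh_lin, IHm. change (c m * Sh a k (y m) + csum m (fun i => (c i * Sh a k (y i))%C) =
      csum m (fun i => (c i * Sh a k (y i))%C) + c m * Sh a k (y m))%C. ring.
Qed.

Lemma maxupto_ge0 n f : 0 <= maxupto n f.
Proof. induction n; simpl. lra. eapply Rle_trans; [apply IHn|apply Rmax_l]. Qed.

Lemma maxupto_ge n f j : (1 <= j <= n)%nat -> f j <= maxupto n f.
Proof.
  induction n; intros H; simpl. lia.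
  destruct (Nat.eq_dec j (S n)). subst. apply Rmax_r.
  eapply Rle_trans; [apply IHn; lia|apply Rmax_l].
Qed.

Lemma maxupto_lt n f r : 0 < r -> (forall j, (1 <= j <= n)%nat -> f j < r) -> maxupto n f < r.
Proof.
  induction n; intros Hr H; simpl. lra.
  apply Rmax_lub_lt. apply IHn; auto; intros; apply H; lia. apply H; lia.
Qed.

Lemma maxupto_tri n f g h : (forall j, (1 <= j <= n)%nat -> f j <= g j + h j) ->
  maxupto n f <= maxupto n g + maxupto n h.
Proof.
  induction n; intros H; simpl. lra.
  apply Rmax_lub.
  - eapply Rle_trans. apply IHn. intros; apply H; lia.
    apply Rplus_le_compat; apply Rmax_l.
  - eapply Rle_trans. apply H; lia.
    apply Rplus_le_compat; apply Rmax_r.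
Qed.

Lemma Dmod_tri a b c : Defs.Cmod (Csub a c) <= Defs.Cmod (Csub a b) + Defs.Cmod (Csub b c).
Proof.
  rewrite !Cmod_eq.
  replace (Csub a c) with (Cplus (Csub a b) (Csub b c)). apply Cmod_triangle.
  destruct a, b, c; unfold Csub, Cplus; simpl; f_equal; ring.
Qed.

Lemma vdist_tri n x y z : vdist n x z <= vdist n x y + vdist n y z.
Proof. unfold vdist. apply maxupto_tri. intros; apply Dmod_tri. Qed.

Lemma boundary_far n S p r :
  (forall w, vdist n p w < r -> S w) ->
  forall z, boundary n S z -> vdist n p z >= r.
Proof.
  intros Hb z [_ Hi].
  destruct (Rlt_or_le (vdist n p z) r) as [Hlt|Hle]; [|lra].
  exfalso; apply Hi. exists (r - vdist n p z). split. lra.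
  intros w Hw. apply Hb. pose proof (vdist_tri n p z w). lra.
Qed.

Definition Cset' n rho c (u : vec) := exists m a mu,
  (forall i, (i < m)%nat -> 0 <= a i /\ Defs.Cmod (Csub (mu i) c) <= rho) /\
  rsum m a = 1 /\
  vec_eq n u (fun k => csum m (fun i => Cscale (a i) (moment (mu i) k))).

Lemma Cset'_Cset n rho c u : Cset' n rho c u -> Cset n rho c u.
Proof.
  intros (m & a & mu & H1 & H2 & H3). exists m, a, (fun i => moment (mu i)).
  split; [|split; auto]. intros i Hi; destruct (H1 i Hi); split; auto.
  exists (mu i); split; auto. intros k _; reflexivity.
Qed.

Lemma pow_bound L n k : 0 <= L -> (k <= n)%nat -> (1 + L) ^ k <= 2 ^ n * Rmax 1 (L ^ n).
Proof.
  intros HL Hk.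
  apply Rle_trans with ((1 + L) ^ n). apply Rle_pow; [lra|lia].
  apply Rle_trans with ((2 * Rmax 1 L) ^ n).
  { apply pow_incr. split. lra. pose proof (Rmax_l 1 L); pose proof (Rmax_r 1 L). lra. }
  rewrite Rpow_mult_distr. apply Rmult_le_compat_l. apply pow_le; lra.
  unfold Rmax at 2. destruct (Rle_dec 1 L).
  - rewrite Rmax_right by lra. apply Rmax_r.
  - rewrite Rmax_left by lra. rewrite pow1. apply Rmax_l.
Qed.

Lemma csum_RtoC m a : csum m (fun i => RtoC (a i)) = RtoC (rsum m a).
Proof.
  induction m; simpl. reflexivity. rewrite IHm. unfold Cadd, RtoC; simpl. f_equal; ring.
Qed.

Lemma transfer n rho :
  (forall u, (forall k, (1 <= k <= n)%nat -> Complex.Cmod (u k) < rho ^ n / 2 ^ n) -> Cset' n rho C0 u) ->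
  forall lam w, vdist n (moment lam) w < rho ^ n / (4 ^ n * Rmax 1 (Defs.Cmod lam ^ n)) ->
  Cset' n rho lam w.
Proof.
  intros Hball lam w Hw.
  set (w' := fun j => match j with O => C1 | _ => w j end).
  set (u := fun j => Sh (- lam)%C j w').
  assert (HM : 0 < Rmax 1 (Defs.Cmod lam ^ n)) by (pose proof (Rmax_l 1 (Defs.Cmod lam ^ n)); lra).
  assert (H2n : 0 < 2 ^ n) by (apply pow_lt; lra).
  assert (Hu : forall k, (1 <= k <= n)%nat -> Complex.Cmod (u k) < rho ^ n / 2 ^ n).
  { intros k Hk. unfold u.
    set (D := vdist n (moment lam) w).
    assert (HD : 0 <= D) by apply maxupto_ge0.
    replace (Sh (- lam)%C k w') with
      (Sh (- lam)%C k (fun j => (1 * (w' j - Complex.Cpow lam j) + Complex.Cpow lam j)%C)).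
    2:{ apply Sh_ext; intros. ring. }
    rewrite Sh_lin, Sh_mom.
    replace (- lam + lam)%C with (RtoC 0) by ring.
    destruct k as [|k']; [lia|]. simpl Complex.Cpow at 2. rewrite Cmult_0_l, Cplus_0_r, Cmult_1_l.
    eapply Rle_lt_trans. apply Sh_bound with (d := D).
    { intros j Hj. destruct j as [|j]. unfold w'. replace (C1 - Complex.Cpow lam 0)%C with (RtoC 0).
      rewrite Cmod_0; auto. unfold C1, RtoC, Cminus, Cplus, Copp; simpl; f_equal; ring.
      unfold w'. unfold D, vdist.
      eapply Rle_trans. 2: apply (maxupto_ge n _ (S j)); lia.
      simpl. rewrite Cmod_eq, <- Cmod_opp. right. f_equal.
      rewrite <- Cpow_eq. unfold moment, Csub, Cminus, Copp, Cplus; simpl. f_equal; ring. }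
    assert (HL : Complex.Cmod (- lam)%C = Defs.Cmod lam) by (rewrite Cmod_opp, Cmod_eq; reflexivity).
    rewrite HL.
    pose proof (pow_bound (Defs.Cmod lam) n (S k') ltac:(rewrite Cmod_eq; apply Cmod_ge_0) ltac:(lia)).
    apply Rle_lt_trans with (D * (2 ^ n * Rmax 1 (Defs.Cmod lam ^ n))).
    apply Rmult_le_compat_l; auto.
    replace (rho ^ n / 2 ^ n) with ((rho ^ n / (4 ^ n * Rmax 1 (Defs.Cmod lam ^ n))) * (2 ^ n * Rmax 1 (Defs.Cmod lam ^ n))).
    apply Rmult_lt_compat_r. apply Rmult_lt_0_compat; auto. exact Hw.
    replace (4 ^ n) with (2 ^ n * 2 ^ n) by (rewrite <- Rpow_mult_distr; f_equal; ring).
    field. split; lra. }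
  destruct (Hball u Hu) as (m & a & mu & H1 & H2 & H3).
  exists m, a, (fun i => (lam + mu i)%C). split; [|split; auto].
  { intros i Hi. destruct (H1 i Hi) as [Ha Hm]. split; auto.
    replace (Csub (lam + mu i)%C lam) with (Csub (mu i) C0); auto.
    unfold Csub, C0, Cplus; simpl; f_equal; ring. }
  intros k Hk.
  transitivity (Sh lam k (fun j => csum m (fun i => (RtoC (a i) * Complex.Cpow (mu i) j)%C))).
  2:{ rewrite Sh_csum. apply f_equal2; auto. apply functional_extensionality. intros i.
      rewrite Cscale_eq. unfold moment. rewrite Cpow_eq, Sh_mom. reflexivity. }
  transitivity (Sh lam k u).
  { unfold u. rewrite Sh_comp. replace (lam + - lam)%C with (RtoC 0) by ring.
    rewrite Sh_0. unfold w'. destruct k; [lia|reflexivity]. }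
  apply Sh_ext. intros j Hj. destruct j as [|j].
  - simpl. transitivity (RtoC (rsum m a)). rewrite H2; reflexivity.
    rewrite <- csum_RtoC. f_equal. apply functional_extensionality; intros i. ring.
  - rewrite (H3 (S j)) by lia. f_equal. apply functional_extensionality; intros i.
    rewrite Cscale_eq. unfold moment. rewrite Cpow_eq. reflexivity.
Qed.

Lemma rsum_ext M f g : (forall i, (i < M)%nat -> f i = g i) -> rsum M f = rsum M g.
Proof. induction M; intros H; simpl; auto. rewrite IHM by (intros; apply H; lia). rewrite H by lia. auto. Qed.

Lemma rsum_plus M f g : rsum M (fun i => f i + g i) = rsum M f + rsum M g.
Proof. induction M; simpl; [ring|]. rewrite IHM; ring. Qed.

Lemma rsum_scal M c f : rsum M (fun i => c * f i) = c * rsum M f.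
Proof. induction M; simpl; [ring|]. rewrite IHM; ring. Qed.

Lemma rsum_const M c : rsum M (fun _ => c) = INR M * c.
Proof. induction M; simpl rsum; [simpl; ring|]. rewrite IHM, S_INR; ring. Qed.

Lemma rsum_swap M K (f : nat -> nat -> R) :
  rsum M (fun i => rsum K (fun j => f i j)) = rsum K (fun j => rsum M (fun i => f i j)).
Proof.
  induction M; simpl.
  - rewrite rsum_const. ring.
  - rewrite IHM. rewrite <- rsum_plus. reflexivity.
Qed.

Lemma rsum_ge M f c : (forall i, (i < M)%nat -> c <= f i) -> INR M * c <= rsum M f.
Proof.
  induction M; intros H; simpl rsum. simpl; lra.
  rewrite S_INR. pose proof (IHM ltac:(intros; apply H; lia)). pose proof (H M ltac:(lia)). lra.
Qed.

Lemma rsum_S M f : rsum (S M) f = rsum M f + f M.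
Proof. reflexivity. Qed.

Lemma rsum_delta n m (X : nat -> R) : (1 <= m <= n)%nat ->
  rsum n (fun i => if Nat.eq_dec (S i) m then X (S i) else 0) = X m.
Proof.
  induction n; intros Hm. lia.
  rewrite rsum_S. cbv beta. destruct (Nat.eq_dec (S n) m) as [e|e].
  - rewrite (rsum_ext n _ (fun _ => 0)). rewrite rsum_const, e. ring.
    intros i Hi. destruct (Nat.eq_dec (S i) m); [lia|auto].
  - rewrite IHn by lia. ring.
Qed.

Lemma csum_pair M (f : nat -> Cx) :
  csum M f = (rsum M (fun i => fst (f i)), rsum M (fun i => snd (f i))).
Proof. induction M; simpl; auto. rewrite IHM. reflexivity. Qed.

Lemma tele_cos x M :
  2 * sin (x / 2) * rsum M (fun j => cos (INR j * x)) = sin ((INR M - 1/2) * x) + sin (x / 2).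
Proof.
  induction M; simpl rsum.
  - simpl INR. replace ((0 - 1/2) * x) with (- (x/2)) by field. rewrite sin_neg. ring.
  - rewrite Rmult_plus_distr_l, IHM, S_INR.
    replace ((INR M + 1 - 1/2) * x) with (INR M * x + x / 2) by field.
    replace ((INR M - 1/2) * x) with (INR M * x - x / 2) by field.
    rewrite sin_plus, sin_minus. ring.
Qed.

Lemma tele_sin x M :
  2 * sin (x / 2) * rsum M (fun j => sin (INR j * x)) = cos (x / 2) - cos ((INR M - 1/2) * x).
Proof.
  induction M; simpl rsum.
  - simpl INR. replace ((0 - 1/2) * x) with (- (x/2)) by field. rewrite cos_neg. ring.
  - rewrite Rmult_plus_distr_l, IHM, S_INR.
    replace ((INR M + 1 - 1/2) * x) with (INR M * x + x / 2) by field.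
    replace ((INR M - 1/2) * x) with (INR M * x - x / 2) by field.
    rewrite cos_plus, cos_minus. ring.
Qed.

Definition th (N : nat) := 2 * PI / INR N.
Definition Cs N q := rsum N (fun j => cos (INR j * (th N * q))).
Definition Ss N q := rsum N (fun j => sin (INR j * (th N * q))).

Lemma orth N p : (0 < p < N)%nat -> Cs N (INR p) = 0 /\ Ss N (INR p) = 0.
Proof.
  intros Hp. set (x := th N * INR p).
  assert (HN : 0 < INR N) by (apply lt_0_INR; lia).
  assert (Hlt : INR p < INR N) by (apply lt_INR; lia).
  assert (Hp0 : 0 < INR p) by (apply lt_0_INR; lia).
  assert (Hs : 0 < sin (x / 2)).
  { apply sin_gt_0; unfold x, th.
    - apply Rmult_lt_0_compat; [|lra]. apply Rmult_lt_0_compat; auto.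
      apply Rmult_lt_0_compat. pose proof PI_RGT_0; lra. apply Rinv_0_lt_compat; auto.
    - replace (2 * PI / INR N * INR p / 2) with (PI * (INR p / INR N)) by (field; lra).
      pose proof PI_RGT_0.
      assert (INR p / INR N < 1) by (apply Rmult_lt_reg_r with (INR N); auto; field_simplify; lra).
      nra. }
  assert (HE : (INR N - 1/2) * x = - (x / 2) + 2 * INR p * PI).
  { unfold x, th. field. lra. }
  split.
  - pose proof (tele_cos x N) as T. rewrite HE, sin_period, sin_neg in T.
    unfold Cs. fold x. nra.
  - pose proof (tele_sin x N) as T. rewrite HE, cos_period, cos_neg in T.
    unfold Ss. fold x. nra.
Qed.

Lemma Cs_neg N q : Cs N (- q) = Cs N q.
Proof. unfold Cs. apply rsum_ext; intros. rewrite <- cos_neg. f_equal. ring. Qed.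
Lemma Ss_neg N q : Ss N (- q) = - Ss N q.
Proof. unfold Ss. rewrite (rsum_ext N _ (fun j => -1 * sin (INR j * (th N * q)))).
  rewrite rsum_scal; ring.
  intros. replace (INR i * (th N * - q)) with (- (INR i * (th N * q))) by ring.
  rewrite sin_neg. ring. Qed.

Lemma orth_diff N k m : (k < N)%nat -> (m < N)%nat -> k <> m ->
  Cs N (INR k - INR m) = 0 /\ Ss N (INR k - INR m) = 0.
Proof.
  intros Hk Hm Hkm. destruct (Nat.lt_ge_cases k m) as [H|H].
  - replace (INR k - INR m) with (- INR (m - k)) by (rewrite minus_INR by lia; ring).
    rewrite Cs_neg, Ss_neg. destruct (orth N (m - k)) as [A B]; [lia|]. rewrite A, B. split; ring.
  - replace (INR k - INR m) with (INR (k - m)) by (rewrite minus_INR by lia; ring).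
    apply orth; lia.
Qed.

Lemma Ss_0 N : Ss N 0 = 0.
Proof. unfold Ss. rewrite (rsum_ext N _ (fun _ => 0)). rewrite rsum_const; ring.
  intros. rewrite Rmult_0_r, Rmult_0_r. apply sin_0. Qed.
Lemma Cs_0 N : Cs N 0 = INR N.
Proof. unfold Cs. rewrite (rsum_ext N _ (fun _ => 1)). rewrite rsum_const; ring.
  intros. rewrite Rmult_0_r, Rmult_0_r. apply cos_0. Qed.

Definition cj N j k := cos (INR j * (th N * INR k)).
Definition sj N j k := sin (INR j * (th N * INR k)).

Lemma prod_sums N k m :
  rsum N (fun j => cj N j k * cj N j m) = (Cs N (INR k - INR m) + Cs N (INR k + INR m)) / 2 /\
  rsum N (fun j => sj N j k * cj N j m) = (Ss N (INR k + INR m) + Ss N (INR k - INR m)) / 2 /\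
  rsum N (fun j => cj N j k * sj N j m) = (Ss N (INR k + INR m) - Ss N (INR k - INR m)) / 2 /\
  rsum N (fun j => sj N j k * sj N j m) = (Cs N (INR k - INR m) - Cs N (INR k + INR m)) / 2.
Proof.
  assert (Hh : forall F G H : nat -> R, (forall j, F j = (G j + H j) / 2) ->
     rsum N F = (rsum N G + rsum N H) / 2).
  { intros F G H E. rewrite (rsum_ext N F (fun j => /2 * (G j + H j))).
    rewrite rsum_scal, rsum_plus. field. intros; rewrite E; field. }
  assert (Hh' : forall F G H : nat -> R, (forall j, F j = (G j - H j) / 2) ->
     rsum N F = (rsum N G - rsum N H) / 2).
  { intros F G H E. rewrite (rsum_ext N F (fun j => /2 * (G j + (-1) * H j))).
    rewrite rsum_scal, rsum_plus, rsum_scal. field. intros; rewrite E; field. }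
  unfold Cs, Ss, cj, sj.
  repeat split; [apply Hh|apply Hh|apply Hh'|apply Hh']; intros j;
  set (A := INR j * (th N * INR k)); set (B := INR j * (th N * INR m));
  (replace (INR j * (th N * (INR k - INR m))) with (A - B) by (unfold A, B; ring));
  (replace (INR j * (th N * (INR k + INR m))) with (A + B) by (unfold A, B; ring));
  rewrite ?cos_plus, ?cos_minus, ?sin_plus, ?sin_minus; field.
Qed.

Lemma key N n k m : (N = S (2 * n))%nat -> (1 <= k <= n)%nat -> (1 <= m <= n)%nat ->
  rsum N (fun j => cj N j k * cj N j m) = (if Nat.eq_dec k m then INR N / 2 else 0) /\
  rsum N (fun j => sj N j k * cj N j m) = 0 /\
  rsum N (fun j => cj N j k * sj N j m) = 0 /\
  rsum N (fun j => sj N j k * sj N j m) = (if Nat.eq_dec k m then INR N / 2 else 0).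
Proof.
  intros HN Hk Hm. destruct (prod_sums N k m) as (A & B & C & D).
  rewrite A, B, C, D. rewrite <- plus_INR.
  destruct (orth N (k + m)) as [E F]; [lia|]. rewrite E, F.
  destruct (Nat.eq_dec k m).
  - subst. rewrite Rminus_diag, Cs_0, Ss_0. repeat split; field.
  - destruct (orth_diff N k m) as [G H]; try lia. rewrite G, H. repeat split; field.
Qed.

Lemma rsum_mulr M f c : rsum M f * c = rsum M (fun i => f i * c).
Proof. induction M; simpl; [ring|]. rewrite <- IHM; ring. Qed.

Lemma Dpow_polar r t m :
  Defs.Cpow (r * cos t, r * sin t) m = (r ^ m * cos (INR m * t), r ^ m * sin (INR m * t)).
Proof.
  induction m; cbn [Defs.Cpow].
  - simpl. rewrite Rmult_0_l, cos_0, sin_0. unfold C1. f_equal; ring.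
  - rewrite IHm. rewrite S_INR. replace ((INR m + 1) * t) with (INR m * t + t) by ring.
    rewrite cos_plus, sin_plus. unfold Cmul; simpl. f_equal; ring.
Qed.

Lemma cs_lb a b t : - sqrt (a * a + b * b) <= a * cos t + b * sin t.
Proof.
  set (s := a * cos t + b * sin t).
  assert (H1 : s * s <= a * a + b * b).
  { pose proof (sin2_cos2 t) as E. unfold Rsqr in E.
    assert (a * a + b * b - s * s = (a * sin t - b * cos t) ^ 2).
    { unfold s. replace (a * a + b * b) with ((a * a + b * b) * (sin t * sin t + cos t * cos t)) by (rewrite E; ring). ring. }
    assert (0 <= (a * sin t - b * cos t) ^ 2) by (apply pow2_ge_0). lra. }
  assert (H2 : sqrt (s * s) <= sqrt (a * a + b * b)) by (apply sqrt_le_1_alt; auto).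
  assert (H3 : sqrt (s * s) = Rabs s) by (apply sqrt_Rsqr_abs).
  rewrite H3 in H2. pose proof (Rle_abs (- s)). rewrite Rabs_Ropp in H. lra.
Qed.

Lemma pow_le_mono rho k n : 0 < rho <= 1 -> (k <= n)%nat -> rho ^ n <= rho ^ k.
Proof.
  intros Hr Hk. replace n with (k + (n - k))%nat by lia. rewrite pow_add.
  assert (0 < rho ^ k) by (apply pow_lt; lra).
  assert (rho ^ (n - k) <= 1) by (rewrite <- (pow1 (n - k)); apply pow_incr; lra).
  assert (0 <= rho ^ (n - k)) by (apply pow_le; lra). nra.
Qed.

Lemma two_pow n : 2 * INR n <= 2 ^ n.
Proof.
  assert (H : forall m, INR m + 1 <= 2 ^ m).
  { induction m. simpl; lra. rewrite S_INR. simpl pow.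
    assert (1 <= 2 ^ m) by (pose proof (pos_INR m); lra). lra. }
  destruct n. simpl; lra. rewrite S_INR. simpl pow. pose proof (H n). lra.
Qed.

Lemma ball0 n rho u : 0 < rho <= 1 ->
  (forall k, (1 <= k <= n)%nat -> Complex.Cmod (u k) < rho ^ n / 2 ^ n) -> Cset' n rho C0 u.
Proof.
  intros Hr Hu.
  set (N := S (2 * n)).
  assert (HN : 0 < INR N) by (apply lt_0_INR; unfold N; lia).
  assert (H2n : 0 < 2 ^ n) by (apply pow_lt; lra).
  set (c1 := fun k => fst (u k) / rho ^ k).
  set (c2 := fun k => snd (u k) / rho ^ k).
  set (g := fun j k => c1 k * cj N j k + c2 k * sj N j k).
  set (a := fun j => (1 + 2 * rsum n (fun i => g j (S i))) / INR N).
  set (mu := fun j => (rho * cos (th N * INR j), rho * sin (th N * INR j))).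
  assert (Hg : forall j k, (1 <= k <= n)%nat -> - / 2 ^ n <= g j k).
  { intros j k Hk. unfold g, c1, c2, cj, sj.
    set (t := INR j * (th N * INR k)).
    assert (Hrk : 0 < rho ^ k) by (apply pow_lt; lra).
    pose proof (cs_lb (fst (u k)) (snd (u k)) t) as Hc.
    assert (Hs : sqrt (fst (u k) * fst (u k) + snd (u k) * snd (u k)) < rho ^ k / 2 ^ n).
    { pose proof (Hu k Hk) as Hk'. rewrite <- Cmod_eq in Hk'. unfold Defs.Cmod in Hk'.
      pose proof (pow_le_mono rho k n Hr ltac:(lia)).
      assert (rho ^ n / 2 ^ n <= rho ^ k / 2 ^ n) by (unfold Rdiv; apply Rmult_le_compat_r; [left; apply Rinv_0_lt_compat; auto|auto]).
      lra. }
    replace (fst (u k) / rho ^ k * cos t + snd (u k) / rho ^ k * sin t)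
      with ((fst (u k) * cos t + snd (u k) * sin t) * / rho ^ k) by (field; lra).
    replace (- / 2 ^ n) with ((- (rho ^ k / 2 ^ n)) * / rho ^ k) by (field; lra).
    apply Rmult_le_compat_r. left; apply Rinv_0_lt_compat; auto. lra. }
  exists N, a, mu. split; [|split].
  - intros i Hi. split.
    + unfold a. apply Rmult_le_pos; [|left; apply Rinv_0_lt_compat; auto].
      assert (INR n * (- / 2 ^ n) <= rsum n (fun i0 => g i (S i0))).
      { apply rsum_ge. intros; apply Hg; lia. }
      pose proof (two_pow n).
      assert (INR n * / 2 ^ n <= / 2).
      { apply Rmult_le_reg_r with (2 * 2 ^ n). nra.
        replace (INR n * / 2 ^ n * (2 * 2 ^ n)) with (2 * INR n) by (field; lra).
        replace (/ 2 * (2 * 2 ^ n)) with (2 ^ n) by field. auto. }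
      lra.
    + unfold mu, Csub, C0, Defs.Cmod; simpl.
      replace ((rho * cos (th N * INR i) - 0) * (rho * cos (th N * INR i) - 0) +
               (rho * sin (th N * INR i) - 0) * (rho * sin (th N * INR i) - 0)) with (rho * rho).
      rewrite sqrt_square; lra.
      pose proof (sin2_cos2 (th N * INR i)) as E. unfold Rsqr in E.
      transitivity (rho * rho * (sin (th N * INR i) * sin (th N * INR i) + cos (th N * INR i) * cos (th N * INR i))).
      rewrite E; ring. ring.
  -
    unfold a. rewrite (rsum_ext N _ (fun j => / INR N * (1 + 2 * rsum n (fun i => g j (S i))))).
    2:{ intros; unfold Rdiv; ring. }
    rewrite rsum_scal, rsum_plus, rsum_scal, rsum_const.
    rewrite <- rsum_swap.
    rewrite (rsum_ext n _ (fun _ => 0)). rewrite rsum_const. field. lra.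
    intros i Hi. unfold g.
    rewrite rsum_plus, rsum_scal, rsum_scal.
    destruct (orth N (S i)) as [A B]. unfold N; lia.
    unfold Cs, Ss in A, B. unfold cj, sj. rewrite A, B. ring.
  - intros m Hm.
    assert (Hmom : forall i, moment (mu i) m = (rho ^ m * cj N i m, rho ^ m * sj N i m)).
    { intros i. unfold moment, mu. rewrite Dpow_polar. unfold cj, sj.
      replace (INR m * (th N * INR i)) with (INR i * (th N * INR m)) by ring. reflexivity. }
    rewrite csum_pair. unfold Cscale. cbn [fst snd].
    assert (Hrm : 0 < rho ^ m) by (apply pow_lt; lra).
    assert (Hinner : forall (P : nat -> nat -> R) (c : nat -> R),
      rsum N (fun j => a j * (rho ^ m * P j m)) =
      rho ^ m / INR N * (rsum N (fun j => P j m) +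
        2 * rsum n (fun i => rsum N (fun j => g j (S i) * P j m)))).
    { intros P _. rewrite (rsum_ext N _ (fun j => rho ^ m / INR N * (P j m + 2 * rsum n (fun i => g j (S i) * P j m)))).
      rewrite rsum_scal, rsum_plus, rsum_scal, rsum_swap. reflexivity.
      intros j _. unfold a. rewrite <- rsum_mulr. field. lra. }
    destruct (orth N m) as [A B]. unfold N; lia.
    rewrite (surjective_pairing (u m)). f_equal.
    + transitivity (rsum N (fun j => a j * (rho ^ m * cj N j m))).
      2:{ apply rsum_ext; intros i _. rewrite Hmom. reflexivity. }
      rewrite (Hinner (cj N) (fun _ => 0)).
      rewrite (rsum_ext n _ (fun i => if Nat.eq_dec (S i) m then (fun k => c1 k * (INR N / 2)) (S i) else 0)).
      rewrite (rsum_delta n m (fun k => c1 k * (INR N / 2))) by lia. cbv beta. unfold Cs, cj in A |- *. rewrite A. unfold c1. field. split; lra.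
      intros i Hi. unfold g.
      rewrite (rsum_ext N _ (fun j => c1 (S i) * (cj N j (S i) * cj N j m) + c2 (S i) * (sj N j (S i) * cj N j m))) by (intros; ring).
      rewrite rsum_plus, rsum_scal, rsum_scal.
      destruct (key N n (S i) m) as (K1 & K2 & K3 & K4); auto; try lia.
      rewrite K1, K2. destruct (Nat.eq_dec (S i) m); ring.
    + transitivity (rsum N (fun j => a j * (rho ^ m * sj N j m))).
      2:{ apply rsum_ext; intros i _. rewrite Hmom. reflexivity. }
      rewrite (Hinner (sj N) (fun _ => 0)).
      rewrite (rsum_ext n _ (fun i => if Nat.eq_dec (S i) m then (fun k => c2 k * (INR N / 2)) (S i) else 0)).
      rewrite (rsum_delta n m (fun k => c2 k * (INR N / 2))) by lia. cbv beta. unfold Ss, sj in B |- *. rewrite B. unfold c2. field. split; lra.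
      intros i Hi. unfold g.
      rewrite (rsum_ext N _ (fun j => c1 (S i) * (cj N j (S i) * sj N j m) + c2 (S i) * (sj N j (S i) * sj N j m))) by (intros; ring).
      rewrite rsum_plus, rsum_scal, rsum_scal.
      destruct (key N n (S i) m) as (K1 & K2 & K3 & K4); auto; try lia.
      rewrite K3, K4. destruct (Nat.eq_dec (S i) m); ring.
Qed.

Theorem lemma4p9 (lam : Cx) (n : nat) (rho : R) :
  0 < rho <= 1 ->
  (forall z, boundary n (Cset n rho lam) z ->
     vdist n (moment lam) z >= rho ^ n / (4 ^ n * Rmax 1 (Cmod lam ^ n))) /\
  (lam = C0 ->
   forall z, boundary n (Cset n rho C0) z ->
     vdist n (moment C0) z >= rho ^ n / 2 ^ n).
Proof.
  intros Hr. split.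
  - apply boundary_far. intros w Hw. apply Cset'_Cset. apply transfer; auto.
    intros u Hu; apply ball0; auto.
  - intros _. apply boundary_far. intros w Hw. apply Cset'_Cset. apply ball0; auto.
    intros k Hk. eapply Rle_lt_trans; [|exact Hw]. unfold vdist.
    eapply Rle_trans; [|apply (maxupto_ge n _ k Hk)]. cbv beta.
    rewrite Cmod_eq, <- Cmod_opp. right. f_equal.
    destruct k as [|k]; [lia|]. unfold moment. cbn [Defs.Cpow].
    destruct (Defs.Cpow C0 k), (w (S k)). unfold Cmul, Csub, C0, Copp; simpl. f_equal; ring.
Qed.
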